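(* For every integer $k\ge1$ and $n=2k-1$, \[k^{n-1}=\sum\frac{n!}{i_0!\,i_1!\cdots i_{k-1}!},\] where the sum runs over all tuples $(i_0,\dots,i_{k-1})$ of nonnegative integers with $i_0+\cdots+i_{k-1}=n$ and $i_0+i_1+\cdots+i_s\ge 2s+2$ for each $s=0,1,\dots,k-2$. *)

(* Defs.v *)
From mathcomp Require Import all_boot.
Set Implicit Arguments. Unset Strict Implicit. Unset Printing Implicit Defensive.

(* Multinomial coefficient n! / (i_0! ... i_{k-1}!) as a natural number
   (the division is exact when the i_j sum to n). *)
Definition multinom (k n : nat) (i : {ffun 'I_k -> 'I_n.+1}) : nat :=
  n`! %/ \prod_(j < k) (i j)`!.

(* Admissible tuples: entries sum to n and, for each s = 0..k-2,
   i_0 + ... + i_s >= 2s+2.  Entries are bounded by n automatically. *)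
Definition admissible (k n : nat) (i : {ffun 'I_k -> 'I_n.+1}) : bool :=
  (\sum_(j < k) (i j : nat) == n) &&
  [forall s : 'I_k, (s.+1 < k) ==> (2 * s + 2 <= \sum_(j < k | j <= s) (i j : nat))].

(* Main.v *)
Require Import Defs.
From mathcomp Require Import all_boot zify.
Set Implicit Arguments. Unset Strict Implicit. Unset Printing Implicit Defensive.
Set Warnings "-notation-overridden".

Lemma fact_prod_dvd k (F : 'I_k -> nat) :
  \prod_(j < k) (F j)`! %| (\sum_(j < k) F j)`!.
Proof.
elim: k F => [|k IH] F; first by rewrite !big_ord0.
rewrite !big_ord_recl.
set S := \sum_(i < k) _.
rewrite -(@bin_fact (F ord0 + S) (F ord0)) ?leq_addr // addKn.
apply: dvdn_mull; apply: dvdn_mul => //; exact: IH.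
Qed.

Definition fcons T k (a : T) (g : {ffun 'I_k -> T}) : {ffun 'I_k.+1 -> T} :=
  [ffun j => if unlift ord0 j is Some j' then g j' else a].

Lemma fcons_bij (T : finType) k :
  bijective (fun p : T * {ffun 'I_k -> T} => fcons p.1 p.2).
Proof.
exists (fun f : {ffun 'I_k.+1 -> T} => (f ord0, [ffun j => f (lift ord0 j)])).
  move=> [a g] /=; congr pair; first by rewrite ffunE unlift_none.
  by apply/ffunP => j; rewrite !ffunE liftK.
move=> f; apply/ffunP => j; rewrite !ffunE /=.
by case: unliftP => [j' ->|->]; rewrite ?ffunE.
Qed.

Lemma fcons_sum T k (a : T) g (F : T -> nat) :
  \sum_(j < k.+1) F (fcons a g j) = F a + \sum_(j < k) F (g j).
Proof. by rewrite big_ord_recl !ffunE unlift_none; congr addn; apply: eq_bigr => j _; rewrite ffunE liftK. Qed.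

Lemma fcons_prod T k (a : T) g (F : T -> nat) :
  \prod_(j < k.+1) F (fcons a g j) = F a * \prod_(j < k) F (g j).
Proof. by rewrite big_ord_recl !ffunE unlift_none; congr muln; apply: eq_bigr => j _; rewrite ffunE liftK. Qed.

Lemma multinom_thm N k m : m <= N ->
  \sum_(i : {ffun 'I_k -> 'I_N.+1} | \sum_(j < k) (i j : nat) == m)
     m`! %/ \prod_(j < k) (i j)`! = k ^ m.
Proof.
elim: k m => [|k IH] m hm.
  case: m hm => [|m] hm.
    rewrite expn0 (big_pred1 [ffun j => ord0]) ?big_ord0 ?divn1 //.
    move=> f /=; rewrite big_ord0 eqxx; symmetry; apply/eqP/ffunP => -[]//.
  by rewrite exp0n // big_pred0 // => f; rewrite big_ord0.
rewrite big_mkcond (reindex _ (onW_bij _ (fcons_bij _ _))) /=.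
rewrite -(pair_big xpredT xpredT (fun (a : 'I_N.+1) (g : {ffun 'I_k -> 'I_N.+1}) =>
  if \sum_(j0 < k.+1) (fcons a g j0 : nat) == m
      then m`! %/ \prod_(j0 < k.+1) (fcons a g j0)`! else 0)) /=.
transitivity (\sum_(a : 'I_N.+1) 'C(m, a) * k ^ (m - a)).
  apply: eq_bigr => a _.
  under eq_bigr => g _ do rewrite (fcons_sum a g (fun x : 'I_N.+1 => (x : nat)))
                              (fcons_prod a g (fun x : 'I_N.+1 => (x : nat)`!)).
  case: (leqP a m) => ham; last first.
    rewrite bin_small // mul0n big1 // => g _.
    case: eqP => // h; exfalso; move: ham; by rewrite -h ltnNge leq_addr.
  rewrite -(big_mkcond (fun g : {ffun 'I_k -> 'I_N.+1} => a + \sum_(j < k) (g j : nat) == m)) /=.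
  rewrite (eq_bigl (fun g : {ffun 'I_k -> 'I_N.+1} => \sum_(j < k) (g j : nat) == m - a)); last first.
    by move=> g; move: (\sum_(j < k) _) => S; apply/eqP/eqP; lia.
  rewrite -IH; last by lia.
  rewrite big_distrr /=; apply: eq_big => g; first by [].
  move=> /eqP hs.
  have hd := fact_prod_dvd (fun j => (g j : nat)); rewrite hs in hd.
  case/dvdnP: hd => q hq.
  have hP : 0 < \prod_(j < k) (g j)`! by rewrite prodn_gt0 // => j; rewrite fact_gt0.
  rewrite -(bin_fact ham) hq.
  rewrite (_ : 'C(m, a) * (a`! * (q * \prod_(j < k) (g j)`!)) = ('C(m, a) * q) * (a`! * \prod_(j < k) (g j)`!)); last by nia.
  by rewrite !mulnK // muln_gt0 fact_gt0.
rewrite -[k.+1]addn1 expnDn.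
under [in RHS]eq_bigr => i _ do rewrite exp1n muln1.
rewrite [RHS](big_ord_widen N.+1 (fun a => 'C(m, a) * k ^ (m - a))) ?ltnS // [RHS]big_mkcond /=.
apply: eq_bigr => i _; case: ltnP => // hi.
by rewrite bin_small.
Qed.
Section Cyc.
Variables (K N : nat).
Local Notation k := K.+1.

Definition sh (d : nat) (j : 'I_k) : 'I_k := inord ((j + d) %% k).
Definition rot d (i : {ffun 'I_k -> 'I_N.+1}) : {ffun 'I_k -> 'I_N.+1} :=
  [ffun j => i (sh d j)].
Definition cc (i : {ffun 'I_k -> 'I_N.+1}) (u : nat) : nat := i (inord (u %% k)).
Definition Pf i t := \sum_(0 <= u < t) cc i u.

Lemma sh_val d j : (sh d j : nat) = (j + d) %% k.
Proof. by rewrite /sh inordK // ltn_pmod. Qed.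

Lemma sh_inj d : injective (sh d).
Proof.
move=> j1 j2 h; have := congr1 (@nat_of_ord _) h; rewrite !sh_val => /eqP.
rewrite eqn_modDr !modn_small // => /eqP e; exact: val_inj.
Qed.

Lemma sum_rot d i (F : 'I_N.+1 -> nat) :
  \sum_(j < k) F (rot d i j) = \sum_(j < k) F (i j).
Proof.
rewrite [RHS](reindex_inj (@sh_inj d)) /=.
by apply: eq_bigr => j _; rewrite ffunE.
Qed.

Lemma prod_rot d i (F : 'I_N.+1 -> nat) :
  \prod_(j < k) F (rot d i j) = \prod_(j < k) F (i j).
Proof.
rewrite [RHS](reindex_inj (@sh_inj d)) /=.
by apply: eq_bigr => j _; rewrite ffunE.
Qed.

Lemma rot_inj d : injective (rot d).
Proof.
move=> i1 i2 h; apply/ffunP => j.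
have := congr1 (fun f : {ffun _ -> _} => f (invF (@sh_inj d) j)) h.
by rewrite /= !ffunE f_invF.
Qed.

Lemma cc_ord i (j : 'I_k) : cc i j = i j.
Proof. by rewrite /cc modn_small // inord_val. Qed.

Lemma Pf_k i : Pf i k = \sum_(j < k) (i j : nat).
Proof. by rewrite /Pf big_mkord; apply: eq_bigr => j _; rewrite cc_ord. Qed.

Lemma Pf_add i t : Pf i (k + t) = Pf i k + Pf i t.
Proof.
rewrite /Pf (big_cat_nat _ (n := k)) ?leq_addr //=; congr addn.
rewrite -{1}[k]add0n big_addn addKn; apply: eq_bigr => u _.
by rewrite /cc addnC modnDl.
Qed.

Lemma prefix_rot d i (s : nat) : s < k ->
  Pf i d + \sum_(j < k | j <= s) (rot d i j : nat) = Pf i (d + s.+1).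
Proof.
move=> hs.
have -> : \sum_(j < k | j <= s) (rot d i j : nat) = \sum_(0 <= u < s.+1) cc i (u + d).
  rewrite (big_nat_widen _ _ _ _ _ hs) big_mkord.
  apply: eq_big => j; first by rewrite ltnS andTb.
  by move=> _; rewrite ffunE.
rewrite /Pf [in RHS](big_cat_nat _ (n := d)) ?leq_addr //=; congr addn.
by rewrite -{2}[d]add0n big_addn [d + _]addnC addnK.
Qed.

Definition good i d := forall r, 0 < r < k -> Pf i d + 2 * r <= Pf i (d + r).

Lemma adm_rot d i :
  admissible (rot d i) <-> (\sum_(j < k) (i j : nat) == N) /\ good i d.
Proof.
rewrite /admissible sum_rot; split.
  case/andP=> -> /forallP h; split => // r /andP[r0 rk].
  have := h (inord r.-1); rewrite inordK; last by lia.
  rewrite prednK // rk /= => hr.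
  have := prefix_rot d i (s := r.-1); rewrite prednK // => <-; last by lia.
  move: hr; move: (\sum_(j < k | _) _) => S; lia.
case=> -> hg; apply/forallP => s; apply/implyP => hs.
have := hg s.+1; rewrite hs /= => /(_ isT).
rewrite -prefix_rot //.
move: (\sum_(j < k | _) _) => S; lia.
Qed.

Lemma good_exists i : Pf i k = 2 * k - 1 -> exists2 d, d < k & good i d.
Proof.
move=> hk.
pose M t := Pf i t + 2 * (k - t).
case: (@arg_minnP _ ord0 xpredT (fun t : 'I_k => M t) isT) => d1 _ hd1.
pose p t := (t < k) && [forall u : 'I_k, M t <= M u].
have ex : exists t, p t.
  by exists d1; rewrite /p ltn_ord /=; apply/forallP => u; exact: hd1.
case: (ex_minnP ex) => d0 /andP[hd0 /forallP hmin] hfirst.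
exists d0 => // r /andP[r0 rk].
case: (ltnP (d0 + r) k) => hlt.
  have := hmin (inord (d0 + r)); rewrite inordK // /M.
  move: (Pf i d0) (Pf i (d0 + r)) => x y; lia.
pose t := d0 + r - k.
have ht : t < d0 by rewrite /t; lia.
have hpt : ~~ p t by apply/negP => /hfirst; rewrite leqNgt ht.
have : M d0 < M t.
  move: hpt; rewrite /p (ltn_trans ht hd0) /= negb_forall => /existsP[u].
  rewrite -ltnNge => hu; exact: leq_ltn_trans (hmin u) hu.
have -> : d0 + r = k + t by rewrite /t; lia.
rewrite Pf_add hk /M.
move: (Pf i d0) (Pf i t) => x y; rewrite /t; lia.
Qed.

Lemma good_unique i d1 d2 : Pf i k = 2 * k - 1 ->
  d1 < k -> d2 < k -> good i d1 -> good i d2 -> d1 = d2.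
Proof.
move=> hk.
wlog: d1 d2 / d1 <= d2.
  move=> W h1 h2 g1 g2; case: (leqP d1 d2) => h; first exact: W.
  by symmetry; apply: W => //; exact: ltnW.
move=> le h1 h2 g1 g2; case: (ltnP d1 d2) => lt; last by apply/eqP; rewrite eqn_leq le lt.
have := g1 (d2 - d1); rewrite subn_gt0 lt /=.
have -> : d1 + (d2 - d1) = d2 by lia.
have : d2 - d1 < k by lia.
move=> -> /(_ isT) A.
have := g2 (d1 + k - d2).
have -> : d2 + (d1 + k - d2) = k + d1 by lia.
rewrite Pf_add hk.
have -> : (0 < d1 + k - d2 < k) = true by apply/andP; split; lia.
move=> /(_ isT).
move: A; move: (Pf i d1) (Pf i d2) => x y; lia.
Qed.

End Cyc.

Lemma count_good K n (i : {ffun 'I_K.+1 -> 'I_n.+1}) :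
  n = 2 * K.+1 - 1 -> \sum_(j < K.+1) (i j : nat) == n ->
  \sum_(d < K.+1) (admissible (rot d i) : nat) = 1.
Proof.
move=> hn hS.
have hk : Pf i K.+1 = 2 * K.+1 - 1 by rewrite Pf_k (eqP hS).
case: (good_exists hk) => d0 hd0 g0.
rewrite (bigD1 (Ordinal hd0)) //=.
have -> : admissible (rot d0 i) by apply/adm_rot.
rewrite big1 // => d hd.
case ha: (admissible (rot d i)) => //.
case/adm_rot: ha => _ gd.
have e := good_unique hk (ltn_ord d) hd0 gd g0.
by move: hd; rewrite -val_eqE /= e eqxx.
Qed.

Theorem mainTheorem10 (k n : nat) (hk : 1 <= k) (hn : n = 2 * k - 1) :
  k ^ (n - 1) = \sum_(i : {ffun 'I_k -> 'I_n.+1} | admissible i) multinom i.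
Proof.
case: k hk hn => [|K] // _ hn.
have total := multinom_thm K.+1 (leqnn n).
have key : \sum_(i : {ffun 'I_K.+1 -> 'I_n.+1} | \sum_(j < K.+1) (i j : nat) == n) multinom i
         = K.+1 * \sum_(i : {ffun 'I_K.+1 -> 'I_n.+1} | admissible i) multinom i.
  under eq_bigr => i hi do rewrite -[multinom i]mul1n -(count_good hn hi) big_distrl /=.
  rewrite exchange_big /=.
  rewrite (eq_bigr (fun _ => \sum_(i : {ffun 'I_K.+1 -> 'I_n.+1} | admissible i) multinom i)).
    by rewrite sum_nat_const card_ord.
  move=> d _.
  symmetry; rewrite (reindex_inj (@rot_inj K n d)) /=.
  rewrite big_mkcond [RHS]big_mkcond /=.
  apply: eq_bigr => i _.
  case ha: (admissible (rot d i)); last by rewrite mul0n if_same.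
  have [hs _] := (adm_rot d i).1 ha.
  by rewrite hs mul1n /multinom (prod_rot d i (fun x : 'I_n.+1 => (x : nat)`!)).
have e : K.+1 ^ n = K.+1 * K.+1 ^ (n - 1) by rewrite -expnS; congr expn; lia.
rewrite /multinom in key.
move: total; rewrite key e => /eqP; rewrite eqn_pmul2l // => /eqP ->.
by [].
Qed.
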